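(* Let $f:\mathcal D\subset\Omega\times(0,\infty)\to\Omega\times(0,\infty)$ be a measure-preserving embedding and suppose there exist $W\in\mathcal C^1_\psi(\Omega\times(0,\infty))$, constants $\beta,\delta>0$ and a decreasing bounded function $k:(0,\infty)\to\mathbb R$ with $\lim_{r\to\infty}k(r)=0$ such that $\beta\le\partial_rW\le\delta$ on $\Omega\times(0,\infty)$ and $W(f(\omega,r))\le W(\omega,r)+k(r)$ on $\mathcal D$. Then there is a measurable set $\mathcal Z\subset\mathcal U$ with $(\mu_\Omega\otimes\lambda)(\mathcal Z)=0$ such that $\liminf_{n\to\infty}r_n<\infty$ for every $(\omega_0,r_0)\in\mathcal U\setminus\mathcal Z$. In particular the set $\mathcal E=\{(\omega_0,r_0)\in\mathcal D_\infty:\lim_{n\to\infty}r_n=\infty\}$ satisfies $\mathcal E\subset\mathcal Z$ and has $\mu_\Omega\otimes\lambda$-measure zero.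
   Context: $\Omega$ is a commutative (written additively), compact, metrizable topological group, and $\psi:\mathbb R\to\Omega$ is a continuous group homomorphism with $\psi(\mathbb R)$ dense. $\mu_\Omega$ is the Haar probability measure of $\Omega$ and $\lambda$ Lebesgue measure on $\mathbb R$. For $U:\Omega\to\mathbb R$, $\partial_\psi U(\omega)=\lim_{t\to0}\frac{U(\omega+\psi(t))-U(\omega)}{t}$; $\mathcal C^1_\psi(\Omega)$ is the space of continuous $U$ with $\partial_\psi U$ existing everywhere and continuous; $\mathcal C^1_\psi(\Omega\times(0,\infty))$ is the set of $W(\omega,r)$ with $W(\cdot,r)\in\mathcal C^1_\psi(\Omega)$ for all $r$ and $W(\omega,\cdot)\in\mathcal C^1(0,\infty)$ for all $\omega$. A measure-preserving embedding is a continuous injective map $f:\mathcal D\to\Omega\times(0,\infty)$, $\mathcal D\subset\Omega\times(0,\infty)$ open, with $(\mu_\Omega\otimes\lambda)(f(\mathcal B))=(\mu_\Omega\otimes\lambda)(\mathcal B)$ for Borel $\mathcal B\subset\mathcal D$. Set $\mathcal D_1=\mathcal D$, $\mathcal D_{n+1}=f^{-1}(\mathcal D_n)$, $\mathcal D_\infty=\bigcap_n\mathcal D_n$; for $(\omega_0,r_0)\in\mathcal D_\infty$ write $(\omega_n,r_n)=f^n(\omega_0,r_0)$, and $\mathcal U=\{(\omega_0,r_0)\in\mathcal D_\infty:\limsup_{n\to\infty}r_n=\infty\}$. *)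

(* Defs.v *)
From HB Require Import structures.
From mathcomp Require Import all_boot all_order all_algebra.
From mathcomp Require Import all_classical all_reals all_analysis.
Set Implicit Arguments. Unset Strict Implicit. Unset Printing Implicit Defensive.
Import Order.TTheory GRing.Theory Num.Theory.
Import numFieldNormedType.Exports.
Local Open Scope classical_set_scope.
Local Open Scope ring_scope.

(* A zmodType is inhabited (by 0); the alias [ptd] records this as a pointed
   type, which the library's generated-sigma-algebra construction requires. *)
Definition ptd (Om : topologicalZmodType) : Type := Om.
HB.instance Definition _ (Om : topologicalZmodType) := TopologicalZmodule.on (ptd Om).
HB.instance Definition _ (Om : topologicalZmodType) := isPointed.Build (ptd Om) 0.
Notation Borel Om := (g_sigma_algebraType (@open (ptd Om))).
Notation OmR Om R := (Borel Om * measurableTypeR R)%type.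

Definition metrizable (R : realType) (T : topologicalType) : Prop :=
  exists d : T -> T -> R,
    (forall x y, d x y = 0 <-> x = y) /\
    (forall x y, d x y = d y x) /\
    (forall x y z, d x z <= d x y + d y z) /\
    (forall x, nbhs x = filter_from [set e : R | 0 < e] (fun e => [set y | d x y < e])).

(* Haar probability measure of a compact abelian group: a translation invariant
   Borel probability measure (unique for compact metrizable groups). *)
Definition haar_probability (R : realType) (Om : topologicalZmodType)
  (mu : probability (Borel Om) R) : Prop :=
  forall (a : Om) (A : set (Borel Om)), measurable A ->
    mu [set x : Borel Om | A ((x : Om) + a)] = mu A.

Section Dpsi.
Variables (R : realType) (Om : topologicalZmodType) (psi : R -> Om).

Definition dq_psi (U : Om -> R) (w : Om) : R -> R :=
  fun t => (U (w + psi t) - U w) / t.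

Definition dpsi (U : Om -> R) (w : Om) : R := lim (dq_psi U w @ dnbhs 0).

Definition C1_psi (U : Om -> R) : Prop :=
  continuous U /\ (forall w, cvg (dq_psi U w @ dnbhs 0)) /\ continuous (dpsi U).

Definition C1_psi_half (W : Om -> R -> R) : Prop :=
  (forall r, 0 < r -> C1_psi (fun w => W w r)) /\
  (forall w, (forall r, 0 < r -> derivable (W w) r 1) /\
             (forall r, 0 < r -> {for r, continuous (derive1 (W w))})).
End Dpsi.

Section Iterates.
Variables (T : Type) (f : T -> T) (D : set T).
(* Dn n = D_{n+1}:  D_1 = D, D_{n+1} = D /\ f^{-1}(D_n) *)
Fixpoint Dn (n : nat) : set T :=
  match n with
  | 0 => D
  | n.+1 => D `&` f @^-1` (Dn n)
  end.
Definition Dinf : set T := \bigcap_n Dn n.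
End Iterates.

Definition rseq (Om : Type) (R : Type) (f : Om * R -> Om * R) (x : Om * R) : nat -> R :=
  fun n => (iter n f x).2.

(* Main.v *)
Require Import Defs.
From HB Require Import structures.
From mathcomp Require Import all_boot all_order all_algebra.
From mathcomp Require Import all_classical all_reals all_analysis.
From mathcomp Require Import measurable_realfun.
From mathcomp Require Import ring lra.
Import Order.TTheory GRing.Theory Num.Theory.
Import numFieldNormedType.Exports.
Local Open Scope classical_set_scope.
Local Open Scope ring_scope.
Lemma last_true (Q : nat -> Prop) N : (exists n, Q n) -> (forall n, (N <= n)%N -> ~ Q n) ->
  exists m, Q m /\ forall j, (m < j)%N -> ~ Q j.
Proof.
elim: N => [[n Qn] H|N IH ex H]; first by have := H n (leq0n n).
have [QN|nQN] := pselect (Q N).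
  by exists N; split => // j Nj; apply: H.
apply: IH => // n; rewrite leq_eqVlt => /orP[/eqP <-//|]; exact: H.
Qed.
Section OpenMeas.
Context (R : realType) (Om : topologicalZmodType).
Hypotheses (Omc : compact [set: Om]) (Omm : metrizable R Om).

Lemma open_meas_prod (O : set (Om * R)) : open O -> measurable (O : set (OmR Om R)).
Proof.
case: Omm => d [d0 [dsym [dtri dnbhs]]] oO.
have ballo c r : open [set y | d c y < r].
  rewrite openE => y /= dy; rewrite /interior /= dnbhs.
  exists (r - d c y) => /=; first by rewrite subr_gt0.
  move=> z /= dz; rewrite (le_lt_trans (dtri c y z))//.
  by rewrite -ltrBrDl.
have cov n : exists s : nat -> Om, forall w, exists i, d (s i) w < n.+1%:R^-1.
  have Hc : cover_compact [set: ptd Om] by rewrite -(compact_cover (ptd Om)).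
  move: Hc => /(_ Om setT (fun c => [set y | d c y < n.+1%:R^-1])).
  case=> //.
    move=> w _; exists w => //=; rewrite (proj2 (d0 w w)) // invr_gt0 ltr0n //.
  move=> F _ HF.
  exists (fun i => nth 0 (finmap.enum_fset F) i) => w.
  have [c /= cF cw] := HF w I.
  exists (index c (finmap.enum_fset F)); rewrite nth_index //.
have [s hs] := choice cov.
pose S n c := [set y : R | forall w, d c w < n.+1%:R^-1 -> O (w, y)].
pose box n c := [set w | d c w < n.+1%:R^-1] `*` (S n c)°.
have -> : O = \bigcup_n \bigcup_i box n (s n i).
  apply/seteqP; split; last first.
    move=> [w y] [n _ [i _ [/= Hw Hy]]].
    by apply: (nbhs_singleton Hy).
  move=> [w y] Ow.
  have := oO; rewrite openE => /(_ _ Ow); rewrite /interior.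
  case=> -[U V] /= [nU nV] UV.
  move: nU; rewrite dnbhs => -[e /= e0 Ue].
  have [n hn] : exists n : nat, n.+1%:R^-1 < e / 2.
    exists (Num.truncn (2 / e)).
    rewrite invf_plt ?posrE ?ltr0n ?divr_gt0 //.
    by rewrite invf_div truncnS_gt.
  have [i hi] := hs n w.
  exists n => //; exists i => //; split => /=; first by [].
  rewrite /interior; apply: filterS nV => y' Vy' w' hw'.
  apply: (UV (w', y')); split => //=; apply: Ue => /=.
  rewrite (le_lt_trans (dtri w (s n i) w'))// dsym.
  by rewrite [e]splitr ltrD // (lt_trans _ hn).
apply: bigcupT_measurable => n; apply: bigcupT_measurable => i.
apply: measurableX.
  by apply: sub_sigma_algebra; apply: ballo.
by apply: open_measurable; apply: open_interior.
Qed.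
End OpenMeas.
Section Anal.
Context (R : realType) (Om : topologicalZmodType) (psi : R -> Om).
Variables (W : Om -> R -> R) (beta delta : R).
Hypotheses (W_C1 : C1_psi_half psi W) (beta_pos : 0 < beta) (delta_pos : 0 < delta)
  (dW_bounds : forall w r, 0 < r -> beta <= derive1 (W w) r <= delta).

Lemma Wdiff w r s : 0 < r -> r <= s ->
  beta * (s - r) <= W w s - W w r <= delta * (s - r).
Proof.
move=> r0; rewrite le_eqVlt => /orP[/eqP <-|rs]; first by rewrite !subrr !mulr0 lexx.
have der x : 0 < x -> derivable (W w) x 1 by move=> x0; exact: (W_C1.2 w).1 x x0.
have hd : forall x, x \in `]r, s[ -> is_derive x 1 (W w) (derive1 (W w) x).
  move=> x; rewrite in_itv /= => /andP[rx _].
  by rewrite derive1E; apply/derivableP/der/(lt_trans r0).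
have hc : {within `[r, s], continuous (W w)}.
  apply: derivable_within_continuous => x; rewrite in_itv /= => /andP[rx _].
  by apply: der; apply: (lt_le_trans r0).
have [c cin ->] := @MVT R (W w) (derive1 (W w)) r s rs hd hc.
have c0 : 0 < c by move: cin; rewrite in_itv /= => /andP[/(lt_trans r0)].
have /andP[h1 h2] := dW_bounds w c c0.
by rewrite ![_ * (s - r)]mulrC !ler_pM2l ?subr_gt0 // h1 h2.
Qed.
Lemma Wlip w a b : 0 < a -> 0 < b -> `|W w a - W w b| <= delta * `|a - b|.
Proof.
move=> a0 b0; have [ab|ba] := leP a b.
  have /andP[_ h] := Wdiff w a b a0 ab.
  rewrite distrC (ger0_norm (_ : 0 <= W w b - W w a)).
    by rewrite distrC ger0_norm ?subr_ge0.
  have /andP[h' _] := Wdiff w a b a0 ab.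
  by apply: le_trans h'; rewrite mulr_ge0 ?subr_ge0 ?(ltW beta_pos).
have ba' := ltW ba.
have /andP[h' h] := Wdiff w b a b0 ba'.
rewrite (ger0_norm (_ : 0 <= W w a - W w b)).
  by rewrite ger0_norm ?subr_ge0.
by apply: le_trans h'; rewrite mulr_ge0 ?subr_ge0 ?(ltW beta_pos).
Qed.

Lemma Wbound : compact [set: Om] -> exists C, forall w, `|W w 1| <= C.
Proof.
move=> Omc.
have cW : continuous (fun w => W w 1) := (W_C1.1 1 ltr01).1.
have cc : compact ((fun w => W w 1) @` [set: Om]).
  by apply: continuous_compact => //; apply: continuous_subspaceT.
have := compact_bounded cc; case=> M [_ HM].
exists (M + 1) => w; apply: (HM (M + 1)); first by rewrite ltrDl.
by exists w.
Qed.

Lemma gcont (x : Om * R) : 0 < x.2 -> {for x, continuous (fun y : Om * R => W y.1 y.2)}.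
Proof.
move=> x0; apply/cvgrPdist_lt => e e0.
have cW : {for x.1, continuous (fun w => W w x.2)} := (W_C1.1 x.2 x0).1 x.1.
have e20 : 0 < e / 2 by rewrite divr_gt0.
have nU : \forall w \near x.1, `|W x.1 x.2 - W w x.2| < e / 2.
  by move/cvgrPdist_lt : cW => /(_ _ e20).
pose eps := Num.min x.2 (e / 2 / delta).
have eps0 : 0 < eps by rewrite lt_min x0 divr_gt0.
exists ([set w | `|W x.1 x.2 - W w x.2| < e / 2], ball x.2 eps) => /=.
  by split => //; apply: nbhsx_ballx.
move=> [w r] [/= hw hr]; move: hr; rewrite /ball /= lt_min => /andP[h1 h2].
have r0 : 0 < r.
  move: h1; rewrite ltr_norml => /andP[_]; rewrite ltrBlDl ltrDr //.
rewrite [e]splitr (le_lt_trans (ler_distD (W w x.2) _ _)) // ltrD //.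
rewrite (le_lt_trans (Wlip w x.2 r x0 r0)) //.
by rewrite -ltr_pdivlMl // mulrC.
Qed.
End Anal.

Lemma open_preimage_in (T U : topologicalType) (D : set T) (h : T -> U) (A : set U) :
  open D -> {in D, continuous h} -> open A -> open (D `&` h @^-1` A).
Proof.
move=> oD hc oA; rewrite openE => x [Dx Ahx].
rewrite /interior; apply: filterI; first by apply: open_nbhs_nbhs.
by apply: (hc x (mem_set Dx)); apply: open_nbhs_nbhs.
Qed.
Section MeasInfra.
Context (R : realType) (Om : topologicalZmodType).
Hypotheses (Omc : compact [set: Om]) (Omm : metrizable R Om).

Lemma pair_meas (D : set (OmR Om R)) (h : OmR Om R -> OmR Om R) : measurable D ->
  measurable_fun D (fst \o h) -> measurable_fun D (snd \o h) -> measurable_fun D h.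
Proof.
move=> mD m1 m2 _ Y mY.
have S_sa : sigma_algebra setT [set Y : set (OmR Om R) | measurable (D `&` h @^-1` Y)].
  split => [|A mA|F mF] /=.
  - by rewrite preimage_set0 setI0.
  - rewrite setTD preimage_setC -setDE.
    have -> : D `\` h @^-1` A = D `\` (D `&` h @^-1` A).
      apply/seteqP; split => x /= [Dx nA]; split => //; first by case.
      by move=> hA; apply: nA.
    exact: measurableD mD mA.
  - rewrite preimage_bigcup setI_bigcupr; exact: bigcupT_measurable mF.
apply: (smallest_sub S_sa _ mY).
move=> A [] [B mB <-] /=; rewrite setTI.
  by rewrite -comp_preimage; apply: m1.
by rewrite -comp_preimage; apply: m2.
Qed.

Lemma cont_meas_Om (D : set (Om * R)) (h : Om * R -> Om) : open D -> {in D, continuous h} ->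
  measurable_fun (D : set (OmR Om R)) (h : OmR Om R -> Borel Om).
Proof.
move=> oD hc; apply: (@measurability _ _ (OmR Om R) (Borel Om) D h (@open (ptd Om))) => //.
move=> _ [A oA <-]; apply: open_meas_prod => //.
by apply: open_preimage_in.
Qed.

Lemma cont_meas_R (D : set (Om * R)) (h : Om * R -> R) : open D -> {in D, continuous h} ->
  measurable_fun (D : set (OmR Om R)) (h : OmR Om R -> measurableTypeR R).
Proof.
move=> oD hc; apply: (@measurability _ _ (OmR Om R) (measurableTypeR R) D h (@RGenOpens.G R)).
  by rewrite RGenOpens.measurableE.
move=> _ [A [x [y ->]] <-]; apply: open_meas_prod => //.
by apply: open_preimage_in => //; apply: itv_open.
Qed.

Lemma cont_meas (D : set (Om * R)) (h : Om * R -> Om * R) : open D -> {in D, continuous h} ->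
  measurable_fun (D : set (OmR Om R)) (h : OmR Om R -> OmR Om R).
Proof.
move=> oD hc; apply: pair_meas.
- exact: open_meas_prod.
- apply: cont_meas_Om => // x xD; apply: continuous_comp; first exact: hc.
  exact: cvg_fst.
- apply: cont_meas_R => // x xD; apply: continuous_comp; first exact: hc.
  exact: cvg_snd.
Qed.
End MeasInfra.
Section Main.
Context (R : realType) (Om : topologicalZmodType).
Hypotheses (Om_compact : compact [set: Om]) (Om_metrizable : metrizable R Om).
Variables (psi : R -> Om) (mu : probability (Borel Om) R).
Variables (D : set (Om * R)) (f : Om * R -> Om * R).
Hypotheses (D_open : open D) (D_pos : forall x, D x -> 0 < x.2)
  (f_cont : {in D, continuous f}) (f_inj : set_inj D f)
  (f_mp : forall B : set (OmR Om R), measurable B -> B `<=` D ->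
      measurable (f @` B : set (OmR Om R)) /\
      (mu \x lebesgue_measure)%E (f @` B) = (mu \x lebesgue_measure)%E B).
Variables (W : Om -> R -> R) (beta delta : R) (k : R -> R).
Hypotheses (W_C1 : C1_psi_half psi W) (beta_pos : 0 < beta) (delta_pos : 0 < delta)
  (dW_bounds : forall w r, 0 < r -> beta <= derive1 (W w) r <= delta)
  (k_noninc : forall r s, 0 < r -> r <= s -> k s <= k r)
  (k_bounded : exists M : R, forall r, 0 < r -> `|k r| <= M)
  (k_lim : k x @[x --> +oo] --> 0)
  (W_f : forall x, D x -> W (f x).1 (f x).2 <= W x.1 x.2 + k x.2).

Local Notation P := (mu \x lebesgue_measure)%E.
Local Notation it n := (iter n f).
Local Notation Di := (Dinf f D).
Let g (x : Om * R) := W x.1 x.2.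

Lemma Di_D x : Di x -> D x.
Proof. by move=> /(_ 0%N I). Qed.

Lemma Di_f x : Di x -> Di (f x).
Proof. by move=> Dx n _; have [] := Dx n.+1 I. Qed.

Lemma Di_it n x : Di x -> Di (it n x).
Proof. by elim: n => //= n IH /IH /Di_f. Qed.

Lemma mD : measurable (D : set (OmR Om R)).
Proof. exact: open_meas_prod. Qed.

Lemma mf : measurable_fun (D : set (OmR Om R)) (f : OmR Om R -> OmR Om R).
Proof. exact: cont_meas. Qed.

Lemma mDn n : measurable (Dn f D n : set (OmR Om R)).
Proof. elim: n => [|n IH] /=; [exact: mD | exact: mf mD _ IH]. Qed.

Lemma mDi : measurable (Di : set (OmR Om R)).
Proof. by apply: bigcapT_measurable => n; exact: mDn. Qed.

Lemma mf_it n : measurable_fun (Di : set (OmR Om R)) (it n : OmR Om R -> OmR Om R).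
Proof.
elim: n => [|n IH]; first exact: measurable_id.
have -> : it n.+1 = it n \o f by apply/funext => x; rewrite iterSr.
apply: (measurable_comp mDi) => //.
  by move=> _ [x Dx <-]; exact: Di_f.
apply: (measurable_funS mD) => //; last exact: mf.
by move=> x /Di_D.
Qed.

Lemma mg : measurable_fun (D : set (OmR Om R)) (g : OmR Om R -> measurableTypeR R).
Proof.
apply: cont_meas_R => // x /set_mem Dx.
rewrite /g. exact (@gcont R Om psi W beta delta W_C1 beta_pos delta_pos dW_bounds _ (D_pos _ Dx)).
Qed.

Lemma mg_it n : measurable_fun (Di : set (OmR Om R)) (g \o it n).
Proof.
apply: (measurable_comp mD _ mg (mf_it n)).
by move=> _ [x Dx <-]; apply: Di_D; exact: Di_it.
Qed.

Lemma mr_it n : measurable_fun (Di : set (OmR Om R)) (snd \o it n).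
Proof.
apply: (measurable_comp measurableT _ measurable_snd (mf_it n)) => //.
Qed.

Lemma it_inj n : set_inj Di (it n).
Proof.
elim: n => [|n IH] x y /set_mem Dx /set_mem Dy; first by [].
rewrite !iterSr => /IH.
move=> /(_ (mem_set (Di_f _ Dx)) (mem_set (Di_f _ Dy))).
apply: f_inj; apply: mem_set; exact: Di_D.
Qed.

Lemma it_mp n (B : set (OmR Om R)) : measurable B -> B `<=` Di ->
  measurable (it n @` B : set (OmR Om R)) /\ P (it n @` B) = P B.
Proof.
elim: n B => [|n IH] B mB BD.
  by rewrite (_ : it 0 @` B = B) //; apply/seteqP; split => [x [y By <-]|x Bx] //; exists x.
have -> : it n.+1 @` B = it n @` (f @` B).
  apply/seteqP; split => [_ [x Bx <-]|_ [_ [x Bx <-] <-]].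
    by exists (f x); [exists x | rewrite iterSr].
  by exists x => //; rewrite iterSr.
have [mfB PfB] := f_mp B mB (fun x Bx => Di_D _ (BD x Bx)).
have fBD : f @` B `<=` Di by move=> _ [x Bx <-]; exact: Di_f _ (BD x Bx).
have [h1 h2] := IH (f @` B) mfB fBD.
by rewrite h2 PfB.
Qed.
Definition Eset := [set x : Om * R | Di x /\ rseq f x @ \oo --> +oo].
Definition Tset (a : R) := [set x | Eset x /\ g x < a /\ forall n, a <= g (it n.+1 x)].

Lemma m_lt (phi : Om * R -> R) a : measurable_fun (Di : set (OmR Om R)) (phi : OmR Om R -> measurableTypeR R) ->
  measurable (Di `&` [set x | phi x < a] : set (OmR Om R)).
Proof.
move=> mp; have := mp mDi _ (measurable_itv `]-oo, a[).
congr measurable; apply/seteqP; split => x /= [Dx h]; split => //; move: h;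
  by rewrite /= in_itv /=.
Qed.

Lemma m_gt (phi : Om * R -> R) a : measurable_fun (Di : set (OmR Om R)) (phi : OmR Om R -> measurableTypeR R) ->
  measurable (Di `&` [set x | a < phi x] : set (OmR Om R)).
Proof.
move=> mp; have := mp mDi _ (measurable_itv `]a, +oo[).
congr measurable; apply/seteqP; split => x /= [Dx h]; split => //; move: h;
  by rewrite /= in_itv /= andbT.
Qed.

Lemma m_ge (phi : Om * R -> R) a : measurable_fun (Di : set (OmR Om R)) (phi : OmR Om R -> measurableTypeR R) ->
  measurable (Di `&` [set x | a <= phi x] : set (OmR Om R)).
Proof.
move=> mp; have := mp mDi _ (measurable_itv `[a, +oo[).
congr measurable; apply/seteqP; split => x /= [Dx h]; split => //; move: h;
  by rewrite /= in_itv /= andbT.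
Qed.

Lemma cvg_rseqP x : (rseq f x @ \oo --> +oo) <->
  (forall M : nat, exists N, forall j, M%:R < rseq f x (j + N)%N).
Proof.
split.
  move=> /cvgryPgt H M; have [N _ HN] := H M%:R.
  by exists N => j; apply: HN; rewrite /= leq_addl.
move=> H; apply/cvgryPgt => A.
have [N HN] := H (Num.truncn A).+1.
exists N => // n /= Nn; rewrite (lt_trans (truncnS_gt A)) //.
by have := HN (n - N)%N; rewrite subnK.
Qed.

Lemma mE : measurable (Eset : set (OmR Om R)).
Proof.
have -> : Eset = Di `&` \bigcap_(M : nat) \bigcup_(N : nat) \bigcap_(j : nat)
    (Di `&` [set x | M%:R < (snd \o it (j + N)%N) x]).
  apply/seteqP; split => x.
    move=> [Dx /cvg_rseqP H]; split => // M _; have [N HN] := H M.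
    by exists N => // j _; split => //; exact: HN.
  move=> [Dx H]; split => //; apply/cvg_rseqP => M.
  have [N _ HN] := H M I; exists N => j; exact: (HN j I).2.
apply: measurableI; first exact: mDi.
apply: bigcapT_measurable => M; apply: bigcupT_measurable => N.
apply: bigcapT_measurable => j; apply: m_gt; exact: mr_it.
Qed.

Lemma mT a : measurable (Tset a : set (OmR Om R)).
Proof.
have -> : Tset a = Eset `&` (Di `&` [set x | g x < a]) `&`
    \bigcap_n (Di `&` [set x | a <= (g \o it n.+1) x]).
  apply/seteqP; split => x.
    move=> [Ex [h1 h2]]; split; first by split => //; split => //; exact: Ex.1.
    by move=> n _; split; [exact: Ex.1 | exact: h2 n].
  by move=> [[Ex [_ h1]] h2]; split => //; split => // n; exact: (h2 n I).2.
apply: measurableI; first apply: measurableI.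
- exact: mE.
- apply: m_lt; exact: mg_it 0.
- apply: bigcapT_measurable => n; apply: m_ge; exact: mg_it.
Qed.
Lemma rseq_it m x : rseq f (it m x) = [sequence rseq f x (n + m)%N]_n.
Proof. by apply/funext => n; rewrite /rseq /= iterD. Qed.

Lemma E_it m x : Eset x -> Eset (it m x).
Proof.
move=> [Dx cx]; split; first exact: Di_it.
by rewrite rseq_it cvg_shiftn.
Qed.

Lemma last_exit x c : Eset x -> (exists n, g (it n x) < c) -> exists m, Tset c (it m x).
Proof.
move=> Ex ex; have [Dx cx] := Ex.
have [C HC] := @Wbound R Om psi W W_C1 Om_compact.
pose M := 1 + `|c + C| / beta.
have hM1 : 0 <= `|c + C| / beta by rewrite divr_ge0 // ltW.
have hM2 : (c + C) / beta <= `|c + C| / beta.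
  by rewrite ler_pM2r ?invr_gt0 // real_ler_norm // num_real.
have [N _ HN] := (proj1 (cvgryPgt _) cx) M.
have nQ : forall n, (N <= n)%N -> ~ (g (it n x) < c).
  move=> n Nn; apply/negP; rewrite -leNgt.
  have Mr : M < (it n x).2 by apply: HN.
  have r1 : 1 <= (it n x).2 by rewrite /M in Mr; lra.
  have /andP[h1 _] := @Wdiff R Om psi W beta delta W_C1 dW_bounds (it n x).1 1 (it n x).2 ltr01 r1.
  have h2 := HC (it n x).1; rewrite ler_norml in h2; case/andP: h2 => h2 _.
  have h3 : (c + C) / beta <= (it n x).2 - 1 by rewrite /M in Mr; lra.
  have h4 : beta * ((c + C) / beta) <= beta * ((it n x).2 - 1) by rewrite ler_pM2l.
  rewrite mulrCA divff ?mulr1 in h4; last by rewrite gt_eqF.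
  rewrite /g; lra.
have [m [Qm Hm]] := @last_true (fun n => g (it n x) < c) N ex nQ.
exists m; split; first exact: E_it.
split => // n; rewrite -iterD leNgt; apply/negP; apply: Hm.
by rewrite addSn ltnS leq_addl.
Qed.
Lemma T_orbit_disj a i j t t' : Tset a t -> Tset a t' -> (i < j)%N -> it i t <> it j t'.
Proof.
move=> Tt Tt' ij e.
have Dt := Tt.1.1; have Dt' := Tt'.1.1.
move: e; rewrite -(subnKC (ltnW ij)) iterD => e.
have := @it_inj i t (it (j - i) t') (mem_set Dt) (mem_set (Di_it _ _ Dt')) e.
move=> tE; have := Tt.2.1; rewrite tE.
have := Tt'.2.2 (j - i).-1; rewrite prednK ?subn_gt0 // => h1 h2.
by move: (le_lt_trans h1 h2); rewrite ltxx.
Qed.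

Lemma TB a a' : a <= a' -> (P (Tset a) <= P (Tset a'))%E.
Proof.
move=> aa'.
pose Tm m := Tset a `&` (Di `&` it m @^-1` Tset a').
have mTm m : measurable (Tm m : set (OmR Om R)).
  by apply: measurableI; [exact: mT | exact: (mf_it m mDi _ (mT a'))].
have TmDi m : Tm m `<=` Di by move=> x [[[]]].
have cover : Tset a `<=` \bigcup_m Tm m.
  move=> x Tx.
  have [m Tm'] := @last_exit x a' Tx.1 (ex_intro _ 0%N (lt_le_trans Tx.2.1 aa')).
  by exists m => //; split => //; split => //; exact: Tx.1.1.
have step1 : (P (Tset a) <= \sum_(m <oo) P (Tm m))%E.
  by apply: (measure_sigma_subadditive P) => //; exact: mT.
apply: (le_trans step1).
rewrite (_ : \sum_(m <oo) P (Tm m) = \sum_(m <oo) P (it m @` Tm m))%E; last first.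
  by apply: eq_eseriesr => m _; rewrite (it_mp m (Tm m) (mTm m) (TmDi m)).2.
have disj : trivIset setT (fun m => it m @` Tm m).
  move=> i j _ _ [y [[t Tt ti] [t' Tt' tj]]].
  case: (ltngtP i j) => // ij; exfalso.
    by apply: (T_orbit_disj _ _ _ _ _ Tt.1 Tt'.1 ij); rewrite ti tj.
  by apply: (T_orbit_disj _ _ _ _ _ Tt'.1 Tt.1 ij); rewrite ti tj.
have mimg m : measurable (it m @` Tm m : set (OmR Om R)) := (it_mp m (Tm m) (mTm m) (TmDi m)).1.
rewrite -measure_semi_bigcup //; last exact: bigcupT_measurable.
apply: le_measure; rewrite ?inE //; first exact: bigcupT_measurable.
  exact: mT.
by move=> _ [m _ [t [_ [_ h]] <-]].
Qed.
Lemma leb_sect (S : set R) w (lo hi : R) : lo <= hi -> measurable S ->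
  (forall r, S r -> 0 < r /\ lo <= W w r < hi) ->
  (lebesgue_measure S <= (((hi - lo) / beta) *+ 2)%:E)%E.
Proof.
move=> lohi mS HS.
have L0 : 0 <= (hi - lo) / beta by rewrite divr_ge0 ?subr_ge0 // ltW.
case: (pselect (exists r, S r)) => [[r0 Sr0]|nS]; last first.
  have -> : S = set0 by apply/seteqP; split => // r Sr; apply: nS; exists r.
  by rewrite measure0 lee_fin mulrn_wge0.
have key p q : S p -> S q -> p <= q -> q - p < (hi - lo) / beta.
  move=> Sp Sq pq; have [p0 /andP[lp up]] := HS p Sp; have [q0 /andP[lq uq]] := HS q Sq.
  have /andP[h _] := @Wdiff R Om psi W beta delta W_C1 dW_bounds w p q p0 pq.
  rewrite -(ltr_pM2l beta_pos) mulrCA divff ?mulr1 ?gt_eqF //.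
  apply: (le_lt_trans h); lra.
have sub : S `<=` ball r0 ((hi - lo) / beta).
  move=> r Sr; rewrite /ball /=.
  have [rr0|r0r] := leP r r0.
    by rewrite ger0_norm ?subr_ge0 //; apply: key.
  rewrite ltr0_norm ?subr_lt0 // opprB; apply: key => //; exact: ltW.
rewrite -(lebesgue_measure_ball r0) //.
apply: le_measure => //; rewrite inE //; exact: measurable_ball.
Qed.
Lemma TA e : 0 < e -> exists A0, forall a, A0 <= a -> (P (Tset a) <= e%:E)%E.
Proof.
move=> e0.
have [C HC] := @Wbound R Om psi W W_C1 Om_compact.
have [M HM] := k_bounded.
pose ep := e * beta / 2.
have ep0 : 0 < ep by rewrite /ep divr_gt0 // mulr_gt0.
have [r1 [_ Hr1]] := (proj1 (cvgrPdist_lt _ _) k_lim) ep ep0.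
pose rho := `|r1| + 1.
have rho1 : 1 <= rho by rewrite /rho lerDr.
have rho0 : 0 < rho by apply: lt_le_trans rho1.
have krho : k rho < ep.
  have := Hr1 rho; rewrite /rho (le_lt_trans (ler_norm r1)) ?ltrDl //.
  by rewrite sub0r normrN => /(_ isT) h; apply: le_lt_trans h; apply: ler_norm.
exists (M + C + delta * (rho - 1) + 1) => a ha.
have -> : P (Tset a) = (\int[mu]_x (lebesgue_measure \o xsection (Tset a)) x)%E by [].
have sec w : (lebesgue_measure (xsection (Tset a) w) <= e%:E)%E.
  have -> : e = ((a - (a - ep)) / beta) *+ 2.
    by rewrite /ep -mulr_natr; field; rewrite gt_eqF.
  apply: leb_sect; first by rewrite lerBlDr lerDl ltW.
    exact: measurable_xsection (mT a).
  move=> r; rewrite /xsection /= inE => Tt.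
  have Dt := Di_D _ Tt.1.1; have r0 : 0 < r := D_pos _ Dt.
  have ga := Tt.2.1; have gfa := Tt.2.2 0%N; have Wf := W_f _ Dt.
  have kM := HM r r0; rewrite ler_norml in kM; case/andP: kM => _ kM.
  rewrite /g /= in ga gfa Wf *.
  have rhor : rho < r.
    rewrite ltNge; apply/negP => rrho.
    have /andP[h1 _] := @Wdiff R Om psi W beta delta W_C1 dW_bounds w r rho r0 rrho.
    have /andP[_ h2] := @Wdiff R Om psi W beta delta W_C1 dW_bounds w 1 rho ltr01 rho1.
    have h3 := HC w; rewrite ler_norml in h3; case/andP: h3 => _ h3.
    have h4 : 0 <= beta * (rho - r) by rewrite mulr_ge0 ?subr_ge0 // ltW.
    lra.
  have kr : k r <= k rho by apply: k_noninc => //; exact: ltW.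
  split => //; apply/andP; split; last lra.
  lra.
have mphi : measurable_fun setT (lebesgue_measure \o xsection (Tset a : set (OmR Om R))).
  exact: measurable_fun_xsection (mT a).
apply: (le_trans (@ge0_le_integral _ _ _ mu setT measurableT _ (cst e%:E) _ mphi _ _)).
- by move=> x _; exact: measure_ge0.
- exact: measurable_cst.
- by move=> x _; exact: sec.
- by rewrite integral_cst //= probability_setT mule1.
Qed.
Lemma T0 a : P (Tset a) = 0%E.
Proof.
apply/eqP; rewrite eq_le measure_ge0 andbT; apply/lee_addgt0Pr => e e0.
rewrite add0e; have [A0 H] := TA e e0.
have h1 := ler_norm a; have h2 := ler_norm A0; have h3 := normr_ge0 A0; have h4 := normr_ge0 a.
have haa : a <= `|a| + `|A0| by lra.
apply: (le_trans (TB _ _ haa)); apply: H; lra.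
Qed.

Lemma E_null : P Eset = 0%E.
Proof.
pose S (j n : nat) := Di `&` it n @^-1` Tset j%:R.
have mS j n : measurable (S j n : set (OmR Om R)) by exact: (mf_it n mDi _ (mT _)).
have S0 j n : P (S j n) = 0%E.
  rewrite -(it_mp n (S j n) (mS j n) (fun x h => h.1)).2.
  apply/eqP; rewrite eq_le measure_ge0 andbT -(T0 j%:R).
  apply: le_measure; rewrite ?inE; first exact: (it_mp n (S j n) (mS j n) (fun x h => h.1)).1.
    exact: mT.
  by move=> _ [x [_ h] <-].
have U0 j : P (\bigcup_n S j n) = 0%E.
  apply/eqP; rewrite eq_le measure_ge0 andbT.
  have <- : (\sum_(n <oo) P (S j n) = 0)%E by apply: eseries0 => n _ _; exact: S0.
  apply: (measure_sigma_subadditive P) => //.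
  exact: bigcupT_measurable.
apply/eqP; rewrite eq_le measure_ge0 andbT.
have <- : (\sum_(j <oo) P (\bigcup_n S j n) = 0)%E by apply: eseries0 => j _ _; exact: U0.
apply: (measure_sigma_subadditive P) => //.
- by move=> j; exact: bigcupT_measurable.
- exact: mE.
move=> x Ex.
pose j := (Num.truncn `|g x|).+1.
have gj : g x < j%:R.
  by apply: le_lt_trans (ler_norm _) (truncnS_gt _).
have [m Tm] := @last_exit x j%:R Ex (ex_intro _ 0%N gj).
by exists j => //; exists m => //; split => //; exact: Ex.1.
Qed.
End Main.

Lemma einf_infty (R : realType) (u : nat -> R) :
  limn_einf (fun n => (u n)%:E) = +oo%E -> u @ \oo --> +oo.
Proof.
move=> h; apply/cvgeryP.
have ce : einfs (fun n => (u n)%:E) @ \oo --> +oo%E.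
  rewrite -h limn_einf_lim; exact: is_cvg_einfs.
apply/cvgeyPge => A; have [N _ HN] := (proj1 (cvgeyPge _) ce) A.
exists N => // n Nn; apply: le_trans (HN n Nn) _.
by apply: ereal_inf_lbound; exists n => /=.
Qed.

Theorem mainTheorem4
  (R : realType) (Om : topologicalZmodType)
  (Om_compact : compact [set: Om]) (Om_hausdorff : hausdorff_space Om)
  (Om_metrizable : metrizable R Om)
  (psi : R -> Om) (psi_cont : continuous psi)
  (psi_add : forall s t, psi (s + t) = psi s + psi t)
  (psi_dense : closure (range psi) = [set: Om])
  (mu : probability (Borel Om) R) (mu_haar : haar_probability mu)
  (D : set (Om * R)) (f : Om * R -> Om * R)
  (D_open : open D) (D_pos : forall x, D x -> 0 < x.2)
  (f_cont : {in D, continuous f}) (f_inj : set_inj D f)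
  (f_pos : forall x, D x -> 0 < (f x).2)
  (f_mp : forall B : set (OmR Om R), measurable B -> B `<=` D ->
      measurable (f @` B : set (OmR Om R)) /\
      (mu \x lebesgue_measure)%E (f @` B) = (mu \x lebesgue_measure)%E B)
  (W : Om -> R -> R) (beta delta : R) (k : R -> R)
  (W_C1 : C1_psi_half psi W) (beta_pos : 0 < beta) (delta_pos : 0 < delta)
  (dW_bounds : forall w r, 0 < r -> beta <= derive1 (W w) r <= delta)
  (k_noninc : forall r s, 0 < r -> r <= s -> k s <= k r)
  (k_bounded : exists M : R, forall r, 0 < r -> `|k r| <= M)
  (k_lim : k x @[x --> +oo] --> 0)
  (W_f : forall x, D x -> W (f x).1 (f x).2 <= W x.1 x.2 + k x.2) :
  let U := [set x | Dinf f D x /\ limn_esup (fun n => (rseq f x n)%:E) = +oo%E] in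
  let E := [set x | Dinf f D x /\ rseq f x @ \oo --> +oo] in
  exists Z : set (OmR Om R),
    [/\ measurable Z, Z `<=` U, (mu \x lebesgue_measure)%E Z = 0%E,
        (forall x, (U `\` Z) x -> (limn_einf (fun n => (rseq f x n)%:E) < +oo)%E) &
        E `<=` Z] /\
    measurable (E : set (OmR Om R)) /\ (mu \x lebesgue_measure)%E E = 0%E.
Proof.
move=> U E.
have mE' : measurable (E : set (OmR Om R)) := @mE R Om Om_compact Om_metrizable D f D_open f_cont.
have E0 : (mu \x lebesgue_measure)%E E = 0%E :=
  @E_null R Om Om_compact Om_metrizable psi mu D f D_open D_pos f_cont f_inj f_mp
    W beta delta k W_C1 beta_pos
    delta_pos dW_bounds k_noninc k_bounded k_lim W_f.
exists E; split; last exact: (conj mE' E0).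
split => //.
- move=> x [Dx cx]; split => //.
  by have [_ ->] := cvg_limn_einf_sup (proj2 (cvgeryP _) cx).
- move=> x [[Dx _] nE]; rewrite ltNge leye_eq; apply/negP => /eqP h.
  by apply: nE; split => //; exact: einf_infty.
Qed.
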